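(* Fix a policy (choosing $A_t$ as a function of the observations available before round $t$) and two parameter vectors $\theta,\theta'\in(0,1)^K$ sharing the same delay CDF $\tau$. Let $\ell_T$ be the log-likelihood ratio $\log\big(p_\theta(\mathcal O_T)/p_{\theta'}(\mathcal O_T)\big)$ of all observations $\mathcal O_T$ collected up to round $T$. In the censored model with threshold $m$, \[ \mathbb{E}_\theta[\ell_T]=\mathbb{E}_\theta\Big[\sum_{s=1}^{T-m}d(\theta_{A_s}\tau_m,\theta'_{A_s}\tau_m)+\sum_{s=T-m+1}^{T}d(\theta_{A_s}\tau_{T-s},\theta'_{A_s}\tau_{T-s})\Big], \] and in the uncensored model, \[ \mathbb{E}_\theta[\ell_T]=\mathbb{E}_\theta\Big[\sum_{s=1}^{T}d(\theta_{A_s}\tau_{T-s},\theta'_{A_s}\tau_{T-s})\Big]. \]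
   Context: Delayed-feedback bandit model: $K$ arms with conversion rates $\theta_1,\dots,\theta_K$; a delay distribution on $\mathbb{N}$ with CDF $\tau_d=\mathbb{P}(D\le d)$. At each round $t$ the learner picks $A_t$ based on past observations; this triggers, conditionally independently given the past, $C_t\sim\mathrm{Bernoulli}(\theta_{A_t})$ and $D_t\sim\tau$. Let $X_{s,t}=C_s\mathbf{1}\{D_s\le t-s\}$ for $s\le t$. Uncensored model: at round $t$ the learner observes all $X_{s,t}$, $1\le s\le t$; so the observations up to round $T$ are $(X_{s,t})_{1\le s\le t\le T}$. Censored model with threshold $m\ge1$: at round $t$ the learner observes $X_{s,t}$ only for $t-m\le s\le t$; so the observations up to $T$ are $(X_{s,t})_{1\le t\le T,\,t-m\le s\le t}$. $\mathbb{E}_\theta$ denotes expectation when the conversion rates are $\theta$. $d(p,q)=p\log(p/q)+(1-p)\log((1-p)/(1-q))$ with the convention $d(0,0)=0$. *)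

(* Defs.v *)
From HB Require Import structures.
From mathcomp Require Import all_boot all_order all_algebra.
From mathcomp Require Import all_classical all_reals all_analysis.
Set Implicit Arguments. Unset Strict Implicit. Unset Printing Implicit Defensive.
Import Order.TTheory GRing.Theory Num.Theory.
Local Open Scope ring_scope.

Section DelayedBandit.
Variable R : realType.

(* Binary KL divergence d(p,q); with MathComp's convention ln x = 0 for
   x <= 0 one gets d(0,0) = 0, as in the paper. *)
Definition kl (p q : R) : R :=
  p * ln (p / q) + (1 - p) * ln ((1 - p) / (1 - q)).

Definition bern (p : R) (c : bool) : R := if c then p else 1 - p.

(* Delay pmf on nat derived from the CDF tau : tau_d = P(D <= d). *)
Definition delay_pmf (tau : nat -> R) (d : nat) : R :=
  if d is d'.+1 then tau d - tau d' else tau 0%N.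

(* An outcome (realisation) is the sequence w of pairs (C_s, D_s),
   with w`_(s-1) = (C_s, D_s) for rounds s = 1, 2, ...  *)
Definition outcome := seq (bool * nat).

Definition Xobs (w : outcome) (s t : nat) : bool :=
  let: (c, d) := nth (false, 0%N) w s.-1 in c && (d <= t - s)%N.

(* Observation model: None = uncensored; Some m = censored with threshold m.
   lowest index s observed at round t (indices start at 1). *)
Definition obs_lo (model : option nat) (t : nat) : nat :=
  if model is Some m then maxn 1 (t - m) else 1%N.

Definition obs_round (model : option nat) (w : outcome) (t : nat) : seq bool :=
  [seq Xobs w s t | s <- iota (obs_lo model t) (t.+1 - obs_lo model t)].

Definition obs_upto (model : option nat) (w : outcome) (n : nat) : seq (seq bool) :=
  [seq obs_round model w r | r <- iota 1 n].

(* A (deterministic) policy maps the observations of rounds 1..t-1 to A_t. *)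
Definition policy (K : nat) := seq (seq bool) -> 'I_K.

Definition action K (pol : policy K) model (w : outcome) (t : nat) : 'I_K :=
  pol (obs_upto model w t.-1).

(* Expectation E_theta[f(w)] over n further rounds, starting from the prefix h:
   at the next round t = size h + 1, A_t is chosen by the policy, then
   C_t ~ Bernoulli(theta_{A_t}) and D_t ~ tau, independently of each other
   given the past. *)
Fixpoint Exp K (pol : policy K) model (theta : 'I_K -> R) (tau : nat -> R)
  (f : outcome -> R) (n : nat) (h : outcome) : R :=
  match n with
  | 0%N => f h
  | n'.+1 =>
      let a := action pol model h (size h).+1 in
      \sum_(c : bool)
        bern (theta a) c *
        limn (fun N => \sum_(0 <= d < N)
                 delay_pmf tau d * Exp pol model theta tau f n' (rcons h (c, d)))
  end.

Definition ExpT K (pol : policy K) model theta tau (T : nat) (f : outcome -> R) : R :=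
  Exp pol model theta tau f T [::].

Definition lik K (pol : policy K) model theta tau (T : nat) (o : seq (seq bool)) : R :=
  ExpT pol model theta tau T (fun w => ((obs_upto model w T == o) : nat)%:R).

Definition llr K (pol : policy K) model theta theta' tau (T : nat) (w : outcome) : R :=
  ln (lik pol model theta tau T (obs_upto model w T) /
      lik pol model theta' tau T (obs_upto model w T)).

End DelayedBandit.

(* Main.v *)
Require Import Defs.
From HB Require Import structures.
From mathcomp Require Import all_boot all_order all_algebra.
From mathcomp Require Import all_classical all_reals all_analysis.
From mathcomp Require Import zify ring lra.
Import Order.TTheory GRing.Theory Num.Theory numFieldTopology.Exports.
Local Open Scope ring_scope.

Section Aux.
Variable R : realType.
Variables (K T : nat) (tau : nat -> R) (pol : policy K) (model : option nat).
Hypothesis tau0 : 0 <= tau 0%N.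
Hypothesis tau_mono : forall d, tau d <= tau d.+1.
Hypothesis tau_le1 : forall d, tau d <= 1.
Hypothesis tau_cvg : (tau @ \oo --> (1 : R)%R)%classic.

Definition H s := if model is Some m then minn m (T - s) else (T - s)%N.
Definition ycode s (x : bool * nat) : option nat :=
  if x.1 && (x.2 <= H s)%N then Some x.2 else None.
Definition rep (y : option nat) : bool * nat :=
  if y is Some d then (true, d) else (false, 0%N).
Definition Ys (w : outcome) : seq (option nat) :=
  [seq ycode i.+1 (nth (false,0%N) w i) | i <- iota 0 (size w)].
Definition canon (ys : seq (option nat)) : outcome := map rep ys.
Definition opts s : seq (option nat) := None :: [seq Some d | d <- iota 0 (H s).+1].
Definition Py (p : R) s (y : option nat) : R :=
  if y is Some d then p * delay_pmf tau d else 1 - p * tau (H s).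
Definition aY (ys : seq (option nat)) i := pol (obs_upto model (canon ys) i).
Fixpoint EY (th : 'I_K -> R) n hy (g : seq (option nat) -> R) : R :=
  match n with
  | 0%N => g hy
  | n'.+1 => \sum_(y <- opts (size hy).+1)
       Py (th (aY hy (size hy))) (size hy).+1 y * EY th n' (rcons hy y) g
  end.

Definition Xy (y : option nat) k := if y is Some d then (d <= k)%N else false.

Lemma Xobs_canon ys s t : Xobs (canon ys) s t = Xy (nth None ys s.-1) (t - s).
Proof.
rewrite /Xobs /canon; case: (ltnP s.-1 (size ys)) => h.
  by rewrite (nth_map None) //; case: nth.
by rewrite !nth_default ?size_map.
Qed.

Lemma Xobs_Ys w s t : (1 <= s)%N -> (t - s <= H s)%N ->
  Xobs (canon (Ys w)) s t = Xobs w s t.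
Proof.
move=> s1 hk; rewrite Xobs_canon /Xobs /Ys.
case: (ltnP s.-1 (size w)) => h.
  rewrite (nth_map 0%N) ?size_iota // nth_iota // add0n prednK //.
  case: (nth _ w _) => c d; rewrite /ycode /=.
  case: c => //=; case: ifP => //= /negbT; rewrite -ltnNge => hd.
  apply/esym/negbTE; rewrite -ltnNge; exact: leq_ltn_trans hk hd.
by rewrite !nth_default ?size_map ?size_iota.
Qed.

Lemma obs_upto_Ys w n : (n <= T)%N ->
  obs_upto model (canon (Ys w)) n = obs_upto model w n.
Proof.
move=> nT; rewrite /obs_upto; apply/eq_in_map => t; rewrite mem_iota => /andP[t1 tn].
rewrite /obs_round; apply/eq_in_map => s; rewrite mem_iota => /andP[s1 s2].
apply: Xobs_Ys; rewrite /obs_lo /H in s1 s2 *; case: model s1 s2 => [m|] s1 s2; lia.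
Qed.

Lemma size_Ys w : size (Ys w) = size w.
Proof. by rewrite size_map size_iota. Qed.

Lemma Ys_rcons h x : Ys (rcons h x) = rcons (Ys h) (ycode (size h).+1 x).
Proof.
rewrite /Ys size_rcons -addn1 iotaD map_cat /= add0n addn1 cats1 nth_rcons ltnn eqxx.
congr rcons; apply/eq_in_map => i; rewrite mem_iota add0n => /andP[_ hi].
by rewrite nth_rcons hi.
Qed.

Lemma obs_upto_take w n : obs_upto model w n = obs_upto model (take n w) n.
Proof.
rewrite /obs_upto; apply/eq_in_map => t; rewrite mem_iota => /andP[t1 tn].
rewrite /obs_round; apply/eq_in_map => s; rewrite mem_iota => /andP[s1 s2].
rewrite /Xobs nth_take //; rewrite /obs_lo in s1 s2; case: model s1 s2 => [m|] s1 s2; lia.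
Qed.

Lemma aY_take ys i : aY ys i = aY (take i ys) i.
Proof. by rewrite /aY /canon map_take -obs_upto_take. Qed.

Lemma aY_rcons hy y i : (i <= size hy)%N -> aY (rcons hy y) i = aY hy i.
Proof.
move=> hi; rewrite aY_take [RHS]aY_take -cats1 takel_cat //.
Qed.


Lemma tau_ge0 d : 0 <= tau d.
Proof. elim: d => // d IH; exact: le_trans IH (tau_mono d). Qed.

Lemma pmf_ge0 d : 0 <= delay_pmf tau d.
Proof. case: d => [|d] /=; first exact: tau0. by rewrite subr_ge0. Qed.

Lemma sum_pmf n : \sum_(0 <= d < n.+1) delay_pmf tau d = tau n.
Proof.
elim: n => [|n IH]; first by rewrite big_nat1.
by rewrite big_nat_recr //= IH addrC subrK.
Qed.

Lemma limn_ev (u : nat -> R) c1 c2 M :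
  (forall N, (M < N)%N -> u N = c1 + c2 * tau N.-1) -> limn u = c1 + c2.
Proof.
move=> hu; apply: cvg_lim; first exact: Rhausdorff.
have h : ((fun N => c1 + c2 * tau N.-1) @ \oo --> c1 + c2)%classic.
  rewrite -(cvg_shiftS (fun N => c1 + c2 * tau N.-1)) /=.
  apply: cvgD; first exact: cvg_cst.
  rewrite -[X in (_ --> X)%classic]mulr1.
  by apply: cvgM; [exact: cvg_cst| exact: tau_cvg].
apply: cvg_trans h; apply: near_eq_cvg.
by exists M.+1 => // N /= hN; rewrite hu.
Qed.

Lemma reduce p s (F : option nat -> R) :
  \sum_(c : bool) bern p c * limn (fun N => \sum_(0 <= d < N)
       delay_pmf tau d * F (ycode s (c, d)))
  = \sum_(y <- opts s) Py p s y * F y.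
Proof.
rewrite big_bool /= big_cons big_map /=.
set A := \sum_(0 <= d < (H s).+1) delay_pmf tau d * F (Some d).
have -> : limn (fun N => \sum_(0 <= d < N) delay_pmf tau d * F (ycode s (false, d)))
    = 0 + F None.
  apply: (@limn_ev _ 0 (F None) 0%N) => N hN.
  case: N hN => // N _; rewrite /ycode /= -big_distrl /= sum_pmf.
  by rewrite mulrC add0r.
have -> : limn (fun N => \sum_(0 <= d < N) delay_pmf tau d * F (ycode s (true, d)))
    = (A - F None * tau (H s)) + F None.
  apply: (@limn_ev _ _ (F None) (H s).+1) => N hN.
  rewrite (@big_cat_nat _ _ _ (H s).+1) //=; last exact: ltnW.
  have -> : \sum_(0 <= d < (H s).+1) delay_pmf tau d * F (ycode s (true, d)) = A.
    apply: eq_big_nat => d /andP[_ hd]; by rewrite /ycode /= -ltnS hd.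
  have -> : \sum_((H s).+1 <= d < N) delay_pmf tau d * F (ycode s (true, d))
      = \sum_((H s).+1 <= d < N) delay_pmf tau d * F None.
    apply: eq_big_nat => d /andP[hd _]; by rewrite /ycode /= leqNgt hd.
  rewrite -big_distrl /=.
  have := sum_pmf N.-1; rewrite prednK; last by lia.
  rewrite (@big_cat_nat _ _ _ (H s).+1) //=; last by lia.
  rewrite sum_pmf => E.
  have -> : \sum_((H s).+1 <= i < N) delay_pmf tau i = tau N.-1 - tau (H s).
    by rewrite -E; ring.
  ring.
rewrite /bern /Py add0r.
have -> : \sum_(i <- iota 0 (H s).+1) p * delay_pmf tau i * F (Some i) = p * A.
  by rewrite /A mulr_sumr; apply: eq_bigr => i _; rewrite mulrA.
ring.
Qed.

Lemma Py_sum p s : \sum_(y <- opts s) Py p s y = 1.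
Proof.
rewrite big_cons big_map /= -mulr_sumr.
have -> : \sum_(i <- iota 0 (H s).+1) delay_pmf tau i = tau (H s) by rewrite -sum_pmf.
ring.
Qed.


Lemma Py_kl p q s : 0 < p < 1 -> 0 < q < 1 ->
  \sum_(y <- opts s) Py p s y * ln (Py p s y / Py q s y)
  = kl (p * tau (H s)) (q * tau (H s)).
Proof.
move=> /andP[p0 p1] /andP[q0 q1].
rewrite big_cons big_map /= /kl.
have -> : \sum_(i <- iota 0 (H s).+1)
    p * delay_pmf tau i * ln (p * delay_pmf tau i / (q * delay_pmf tau i))
    = p * tau (H s) * ln (p / q).
  transitivity (\sum_(i <- iota 0 (H s).+1) delay_pmf tau i * (p * ln (p / q))).
    apply: eq_bigr => i _.
    case: (eqVneq (delay_pmf tau i) 0) => [->|h]; first by rewrite !(mulr0, mul0r).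
    rewrite -mulf_div divff // mulr1; ring.
  rewrite -big_distrl /=.
  have -> : \sum_(i <- iota 0 (H s).+1) delay_pmf tau i = tau (H s) by rewrite -sum_pmf.
  ring.
case: (eqVneq (tau (H s)) 0) => [->|h].
  rewrite !mulr0 !mul0r; ring.
rewrite -mulf_div divff // mulr1; ring.
Qed.

Lemma Py_pos p q s y : 0 < p < 1 -> 0 < q < 1 -> Py q s y != 0 -> 0 < Py p s y.
Proof.
move=> /andP[p0 p1] /andP[q0 q1]; case: y => [d|] /= hq.
  rewrite mulr_gt0 // lt_neqAle pmf_ge0 andbT eq_sym.
  by apply: contra hq => /eqP ->; rewrite mulr0.
rewrite subr_gt0; apply: le_lt_trans p1; rewrite ler_piMr //; exact: ltW.
Qed.

Definition good th ys := forall i, (i < size ys)%N ->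
  nth None ys i \in opts i.+1 /\ Py (th (aY ys i)) i.+1 (nth None ys i) != 0.

Lemma EY_cong th n : forall hy g1 g2, (size hy + n = T)%N -> good th hy ->
  (forall ys, size ys = T -> good th ys -> g1 ys = g2 ys) ->
  EY th n hy g1 = EY th n hy g2.
Proof.
elim: n => [|n IH] hy g1 g2 hs hg hgg.
  by rewrite addn0 in hs; exact: hgg hs hg.
rewrite /=.
rewrite big_seq_cond [RHS]big_seq_cond; apply: eq_bigr => y /andP[yin _].
case: (eqVneq (Py (th (aY hy (size hy))) (size hy).+1 y) 0) => [->|hP].
  by rewrite !mul0r.
congr (_ * _); apply: IH; [by rewrite size_rcons addSnnS| |exact: hgg].
move=> i; rewrite size_rcons ltnS leq_eqVlt => /orP[/eqP ->|hi].
  rewrite nth_rcons ltnn eqxx /= aY_rcons ?leqnn; split; [exact: yin | exact: hP].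
rewrite nth_rcons hi aY_rcons; [exact: hg | exact: ltnW].
Qed.

Lemma EY_add th n : forall hy g1 g2,
  EY th n hy (fun ys => g1 ys + g2 ys) = EY th n hy g1 + EY th n hy g2.
Proof.
elim: n => [|n IH] hy g1 g2 //=.
rewrite -big_split /=; apply: eq_bigr => y _; by rewrite IH mulrDr.
Qed.

Lemma obs_nth w s t : (1 <= s)%N -> (s <= t)%N -> (t <= T)%N ->
  (obs_lo model t <= s)%N ->
  Xobs w s t = nth false (nth [::] (obs_upto model w T) t.-1) (s - obs_lo model t).
Proof.
move=> s1 st tT lo.
rewrite /obs_upto (nth_map 0%N) ?size_iota; last lia.
rewrite nth_iota; last lia.
rewrite add1n prednK; last lia.
rewrite /obs_round (nth_map 0%N) ?size_iota; last lia.
rewrite nth_iota; last lia.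
by rewrite subnKC.
Qed.

Lemma opts_mem y s : (y \in opts s) = (if y is Some d then (d <= H s)%N else true).
Proof.
rewrite in_cons; case: y => [d|]; last by [].
have -> : (Some d == None) = false by [].
rewrite orFb mem_map; last exact: Some_inj.
by rewrite mem_iota add0n ltnS.
Qed.

Lemma uniq_opts s : uniq (opts s).
Proof.
rewrite /opts cons_uniq map_inj_uniq; last exact: Some_inj.
rewrite iota_uniq andbT.
by apply/negP => /mapP[x _].
Qed.

Definition valid ys := forall i, (i < T)%N -> nth None ys i \in opts i.+1.

Lemma inj_obs ys1 ys2 : size ys1 = T -> size ys2 = T -> valid ys1 -> valid ys2 ->
  obs_upto model (canon ys1) T = obs_upto model (canon ys2) T -> ys1 = ys2.
Proof.
move=> s1 s2 v1 v2 E; apply: (@eq_from_nth _ None); first by rewrite s1 s2.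
move=> i; rewrite s1 => hi.
have hX : forall k, (k <= H i.+1)%N ->
    Xy (nth None ys1 i) k = Xy (nth None ys2 i) k.
  move=> k hk.
  have := Xobs_canon ys1 i.+1 (i.+1 + k); have := Xobs_canon ys2 i.+1 (i.+1 + k).
  rewrite /= addKn => <- <-.
  rewrite !(@obs_nth _ i.+1 (i.+1 + k)) ?E //;
    rewrite /obs_lo /H in hk *; case: model hk => [m|] hk; lia.
move: (v1 i hi) (v2 i hi) hX; rewrite !opts_mem.
case: (nth None ys1 i) => [d1|]; case: (nth None ys2 i) => [d2|] h1 h2 hX.
- move: (hX d1 h1) (hX d2 h2); rewrite /= !leqnn => e1 e2.
  by congr Some; apply/eqP; rewrite eqn_leq e2 -e1.
- by move: (hX d1 h1); rewrite /= leqnn.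
- by move: (hX d2 h2); rewrite /= leqnn.
- by [].
Qed.

Lemma EY_ind th (ys0 : seq (option nat)) : size ys0 = T -> valid ys0 ->
  forall n (hy : seq (option nat)), (size hy + n = T)%N ->
  EY th n hy (fun ys => ((ys == ys0) : nat)%:R) =
  if hy == take (size hy) ys0 then
    \prod_(size hy <= i < T) Py (th (aY ys0 i)) i.+1 (nth None ys0 i)
  else 0.
Proof.
move=> s0 v0; elim => [|n IH] hy hs /=.
  rewrite addn0 in hs; rewrite hs -s0 take_size big_geq //.
  by case: (hy == ys0).
have hk : (size hy < T)%N by lia.
transitivity (\sum_(y <- opts (size hy).+1)
   Py (th (aY hy (size hy))) (size hy).+1 y *
   (if (hy == take (size hy) ys0) && (y == nth None ys0 (size hy)) then
      \prod_((size hy).+1 <= i < T) Py (th (aY ys0 i)) i.+1 (nth None ys0 i)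
    else 0)).
  apply: eq_bigr => y _; rewrite IH; last by rewrite size_rcons; lia.
  by rewrite size_rcons (take_nth None) ?s0 // eqseq_rcons.
case: (eqVneq hy (take (size hy) ys0)) => [E|ne] /=.
  rewrite (bigD1_seq (nth None ys0 (size hy))) /=; last exact: uniq_opts.
    rewrite eqxx [X in _ + X]big1 ?addr0; last first.
      by move=> y /negbTE ->; rewrite mulr0.
    by rewrite [in RHS]big_ltn // [aY ys0 _]aY_take -E.
  exact: v0.
by rewrite big1 // => y _; rewrite mulr0.
Qed.

Lemma Exp_EY th f : (forall w, size w = T -> f w = f (canon (Ys w))) ->
  forall n h, (size h + n = T)%N ->
  Exp pol model th tau f n h = EY th n (Ys h) (fun ys => f (canon ys)).
Proof.
move=> hf; elim => [|n IH] h hs /=.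
  rewrite addn0 in hs; exact: hf.
rewrite size_Ys.
have ha : aY (Ys h) (size h) = action pol model h (size h).+1.
  by rewrite /aY obs_upto_Ys //; lia.
rewrite ha; apply: (eq_trans _ (reduce _ _
  (fun y => EY th n (rcons (Ys h) y) (fun ys => f (canon ys))))).
apply: eq_bigr => c _; congr (_ * _); congr (lim _); f_equal.
apply: funext => N; apply: eq_bigr => d _ /=.
rewrite IH ?Ys_rcons //; rewrite size_rcons; lia.
Qed.


Lemma lik_prod th (ys0 : seq (option nat)) : size ys0 = T -> valid ys0 ->
  lik pol model th tau T (obs_upto model (canon ys0) T) =
  \prod_(0 <= i < T) Py (th (aY ys0 i)) i.+1 (nth None ys0 i).
Proof.
move=> s0 v0; rewrite /lik /ExpT.
rewrite (@Exp_EY th _ _ T [::]); last by [].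
  rewrite [Ys [::]]/Ys /=.
  rewrite (@EY_cong th T [::] _ (fun ys => ((ys == ys0) : nat)%:R)).
  - rewrite (@EY_ind th ys0 s0 v0 T [::]); last by [].
    by rewrite take0 eqxx.
  - by [].
  - by move=> i.
  - move=> ys hs hg; congr ((nat_of_bool _)%:R).
    apply/eqP/eqP => [E|->]; last by [].
    apply: inj_obs => //; move=> i hi; rewrite -hs in hi; by case: (hg i hi).
by move=> w _; rewrite obs_upto_Ys.
Qed.

Definition term (th th' : 'I_K -> R) ys i :=
  ln (Py (th (aY ys i)) i.+1 (nth None ys i) / Py (th' (aY ys i)) i.+1 (nth None ys i))
  - kl (th (aY ys i) * tau (H i.+1)) (th' (aY ys i) * tau (H i.+1)).

Lemma EY_D th th' : (forall i, 0 < th i < 1) -> (forall i, 0 < th' i < 1) ->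
  forall n hy, (size hy + n = T)%N ->
  EY th n hy (fun ys => \sum_(0 <= i < T) term th th' ys i)
  = \sum_(0 <= i < size hy) term th th' hy i.
Proof.
move=> hth hth'; elim => [|n IH] hy hs.
  by rewrite addn0 in hs; rewrite /= hs.
rewrite /=.
set a := aY hy (size hy).
set S := \sum_(0 <= i < size hy) term th th' hy i.
set k := kl (th a * tau (H (size hy).+1)) (th' a * tau (H (size hy).+1)).
transitivity (\sum_(y <- opts (size hy).+1) Py (th a) (size hy).+1 y *
   (S + (ln (Py (th a) (size hy).+1 y / Py (th' a) (size hy).+1 y) - k))).
  apply: eq_bigr => y _; rewrite IH; last by rewrite size_rcons; lia.
  congr (_ * _); rewrite size_rcons big_nat_recr //=; congr (_ + _).
    apply: eq_big_nat => i /andP[_ hi].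
    by rewrite /term nth_rcons hi aY_rcons // ltnW.
  by rewrite /term nth_rcons ltnn eqxx /= aY_rcons.
transitivity (\sum_(y <- opts (size hy).+1) Py (th a) (size hy).+1 y *
      ln (Py (th a) (size hy).+1 y / Py (th' a) (size hy).+1 y)
   + (S - k) * \sum_(y <- opts (size hy).+1) Py (th a) (size hy).+1 y).
  rewrite mulr_sumr -big_split /=; apply: eq_bigr => y _; ring.
rewrite Py_sum Py_kl //; rewrite /k; ring.
Qed.

Lemma Py_None_pos p s : 0 < p < 1 -> 0 < Py p s None.
Proof.
move=> /andP[p0 p1] /=.
rewrite subr_gt0; apply: le_lt_trans p1; rewrite ler_piMr //; exact: ltW.
Qed.

Lemma ln_prod (F : nat -> R) n : (forall i, 0 < F i) ->
  ln (\prod_(0 <= i < n) F i) = \sum_(0 <= i < n) ln (F i).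
Proof.
move=> hF; elim: n => [|n IH]; first by rewrite !big_geq // ln1.
rewrite !big_nat_recr //= lnM ?IH // posrE //.
exact: prodr_gt0.
Qed.

Lemma main_generic th th' : (forall i, 0 < th i < 1) -> (forall i, 0 < th' i < 1) ->
  forall gK : outcome -> R,
  (forall w, size w = T -> gK w = gK (canon (Ys w))) ->
  (forall ys, size ys = T -> good th ys -> gK (canon ys) =
     \sum_(0 <= i < T) kl (th (aY ys i) * tau (H i.+1)) (th' (aY ys i) * tau (H i.+1))) ->
  ExpT pol model th tau T (llr pol model th th' tau T) = ExpT pol model th tau T gK.
Proof.
move=> hth hth' gK hK1 hK2; rewrite /ExpT.
rewrite (@Exp_EY th _ _ T [::]); last by []; last first.
  by move=> w _; rewrite /llr obs_upto_Ys.
rewrite (@Exp_EY th gK hK1 T [::]); last by [].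
rewrite (@EY_cong th T _ _
  (fun ys => gK (canon ys) + \sum_(0 <= i < T) term th th' ys i)).
- by rewrite EY_add (@EY_D th th' hth hth' T [::]) // big_geq // addr0.
- by [].
- by move=> i.
move=> ys hs hg.
have v : valid ys by move=> i hi; rewrite -hs in hi; case: (hg i hi).
rewrite hK2 // /llr !lik_prod // -prodf_div ln_prod; last first.
  move=> i; case: (ltnP i (size ys)) => hi.
    case: (hg i hi) => _ hP.
    by apply: divr_gt0; [exact: (@Py_pos _ _ _ _ (hth _) (hth _) hP) | exact: (@Py_pos _ _ _ _ (hth' _) (hth _) hP)].
  by rewrite nth_default //; apply: divr_gt0; apply: Py_None_pos.
rewrite -big_split /=; apply: eq_bigr => i _; rewrite /term; ring.
Qed.

End Aux.

Theorem lemma2 (R : realType) (K T : nat) (tau : nat -> R)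
  (tau0 : 0 <= tau 0%N) (tau_mono : forall d, tau d <= tau d.+1)
  (tau_le1 : forall d, tau d <= 1) (tau_cvg : (tau @ \oo --> (1 : R)%R)%classic)
  (theta theta' : 'I_K -> R)
  (htheta : forall i, 0 < theta i < 1) (htheta' : forall i, 0 < theta' i < 1)
  (pol : policy K) :
  (forall m : nat, (1 <= m)%N ->
     ExpT pol (Some m) theta tau T (llr pol (Some m) theta theta' tau T) =
     ExpT pol (Some m) theta tau T (fun w =>
       \sum_(1 <= s < (T - m).+1)
          kl (theta (action pol (Some m) w s) * tau m)
             (theta' (action pol (Some m) w s) * tau m)
     + \sum_((T - m).+1 <= s < T.+1)
          kl (theta (action pol (Some m) w s) * tau (T - s)%N)
             (theta' (action pol (Some m) w s) * tau (T - s)%N)))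
  /\
  ExpT pol None theta tau T (llr pol None theta theta' tau T) =
  ExpT pol None theta tau T (fun w =>
    \sum_(1 <= s < T.+1)
       kl (theta (action pol None w s) * tau (T - s)%N)
          (theta' (action pol None w s) * tau (T - s)%N)).
Proof.
split.
  move=> m _.
  refine (@main_generic R K T tau pol (Some m) tau0 tau_mono tau_le1 tau_cvg theta theta' htheta htheta' _ _ _).
    move=> w hw; congr (_ + _); apply: eq_big_nat => s /andP[_ hs];
      rewrite /action (@obs_upto_Ys R T tau _ tau0) //; lia.
  move=> ys hs _.
  rewrite [RHS](@big_cat_nat _ _ _ (T - m)) /=; [|lia|lia].
  rewrite !big_add1 /=; congr (_ + _).
    apply: eq_big_nat => i /andP[_ hi]; rewrite /H.
    by have -> : minn m (T - i.+1) = m by lia.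
  apply: eq_big_nat => i /andP[hi1 hi]; rewrite /H.
  by have -> : minn m (T - i.+1) = (T - i.+1)%N by lia.
refine (@main_generic R K T tau pol None tau0 tau_mono tau_le1 tau_cvg theta theta' htheta htheta' _ _ _).
  move=> w hw; apply: eq_big_nat => s /andP[_ hs];
    rewrite /action (@obs_upto_Ys R T tau _ tau0) //; lia.
move=> ys hs _.
by rewrite big_add1 /=.
Qed.
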